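(* For any collective choice problem satisfying the standing assumptions in the context, an equilibrium exists in the game with private signals. In the public information benchmark, in which every voter observes the entire signal profile $s$ before voting, an equilibrium exists and it is unique.
   Context: Let $n\ge3$ be odd, $\mathcal N=\{1,\dots,n\}$, $\tau=(n-1)/2$; voters vote for $p^*$ or $p_*$ and a policy wins iff it gets strictly more than $\tau$ votes. Finite payoff sets $\mathcal V^{p^*},\mathcal V^{p_*}\subset\mathbb R$, signal set $\mathcal S=\{s^0,\dots,s^K\}$, $\mathcal M=\{s^1,\dots,s^K\}$, state space $\Omega=(\mathcal V^{p^*}\times\mathcal V^{p_*})^n\times\mathcal S^n$ with probability $P$; $V_i^d=V_i^{p^*}-V_i^{p_*}$; $V_i^d(E)=E_P[V_i^d\mid E]$ if $P(E)>0$, $0$ otherwise. $s^k\in\mathcal M$ is good news if $V_i^d(S_i=s^k)>0$, bad news if $<0$; $G,B$ count voters with good/bad news. Standing assumptions: $V_i^d(\Omega)>0$; $P$ invariant under permutations of voters; if $s_i=s^0$ then $P(V=v,S=s)=P(V=v,S_{-i}=s_{-i})P(S_i=s^0)$; if $s_i\ne s^0$ then $V_i^d(S=s)>0$ iff $V_i^d(S_i=s_i)>0$; $V_i^d(E)\ne0$ for all $i$ and non-null $E$; $P(B\ge1)>0$ and $P(G\ge\tau)>0$. With private signals, voter $i$ observes only $s_i$ and a strategy is $\sigma_i:\mathcal S\to[0,1]$; with public information, a strategy is $\phi_i:\mathcal S^n\to[0,1]$. ''Equilibrium'' means Bayes–Nash equilibrium in weakly undominated strategies. *)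

(* Defs.v *)
From HB Require Import structures.
From mathcomp Require Import all_boot all_order all_algebra all_fingroup.
From mathcomp Require Import reals.
Set Implicit Arguments. Unset Strict Implicit. Unset Printing Implicit Defensive.
Import Order.TTheory GRing.Theory Num.Theory.
Local Open Scope ring_scope.

Section Model.
Variables (R : realType) (n K : nat) (A1 A2 : finType).
Variables (v1 : A1 -> R) (v2 : A2 -> R).

(* signals: 'I_K.+1 = {s^0,...,s^K}, with s^0 = ord0 *)
Definition signal := 'I_K.+1.
(* state space Omega = (V^{p*} x V^{p_*})^n x S^n ; the finite payoff sets
   V^{p*}, V^{p_*} subset R are the images of injective maps v1, v2 *)
Definition Omega := ({ffun 'I_n -> A1 * A2} * {ffun 'I_n -> signal})%type.

Variable P : {ffun Omega -> R}.

Definition is_prob := (forall w, 0 <= P w) /\ \sum_w P w = 1.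

Definition Pr (E : pred Omega) : R := \sum_(w | E w) P w.

Definition Econd (f : Omega -> R) (E : pred Omega) : R :=
  if 0 < Pr E then (\sum_(w | E w) P w * f w) / Pr E else 0.

Definition Vstar (i : 'I_n) (w : Omega) : R := v1 (w.1 i).1.
Definition Vlow (i : 'I_n) (w : Omega) : R := v2 (w.1 i).2.
Definition Vd (i : 'I_n) (w : Omega) : R := Vstar i w - Vlow i w.
Definition Sig (i : 'I_n) (w : Omega) : signal := w.2 i.

Definition ev_Si (i : 'I_n) (k : signal) : pred Omega := fun w => Sig i w == k.
Definition ev_S (s : {ffun 'I_n -> signal}) : pred Omega := fun w => w.2 == s.

Definition VdE (i : 'I_n) (E : pred Omega) : R := Econd (Vd i) E.

Definition good_news (i : 'I_n) (k : signal) : bool :=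
  (k != ord0) && (0 < VdE i (ev_Si i k)).
Definition bad_news (i : 'I_n) (k : signal) : bool :=
  (k != ord0) && (VdE i (ev_Si i k) < 0).

Definition Gcount (w : Omega) : nat := #|[set i | good_news i (Sig i w)]|.
Definition Bcount (w : Omega) : nat := #|[set i | bad_news i (Sig i w)]|.

Definition tau : nat := (n.-1)./2.

Definition A_prior_favors := forall i : 'I_n, 0 < VdE i predT.

Definition A_symmetric := forall (pi : {perm 'I_n}) (w : Omega),
  P ([ffun j => w.1 (pi j)], [ffun j => w.2 (pi j)]) = P w.

Definition A_uninformed := forall (i : 'I_n) (v : {ffun 'I_n -> A1 * A2})
  (s : {ffun 'I_n -> signal}), s i = ord0 ->
  P (v, s) = Pr (fun w => (w.1 == v) && [forall j, (j != i) ==> (w.2 j == s j)])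
             * Pr (ev_Si i ord0).

Definition A_own_signal_decisive := forall (i : 'I_n) (s : {ffun 'I_n -> signal}),
  s i != ord0 -> (0 < VdE i (ev_S s) <-> 0 < VdE i (ev_Si i (s i))).

Definition A_nonzero := forall (i : 'I_n) (E : pred Omega), 0 < Pr E -> VdE i E != 0.

Definition A_news := 0 < Pr (fun w => (1 <= Bcount w)%N) /\
                     0 < Pr (fun w => (tau <= Gcount w)%N).

(* probability that p* gets strictly more than tau votes when each voter j
   independently votes for p* with probability q j *)
Definition pwin (q : 'I_n -> R) : R :=
  \sum_(b : {ffun 'I_n -> bool} | (tau < #|[set j | b j]|)%N)
     \prod_(j < n) (if b j then q j else 1 - q j).

(* A generic information structure: voter j observes obs j w : T.
   A (behavioral) strategy of voter j is a map T -> R giving the probability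
   of voting for p*. *)
Section Game.
Variables (T : Type) (obs : 'I_n -> Omega -> T).

Definition strategy := T -> R.
Definition profile := 'I_n -> strategy.

Definition valid (s : strategy) := forall t, 0 <= s t <= 1.
Definition valid_profile (sg : profile) := forall j, valid (sg j).

Definition upd (sg : profile) (i : 'I_n) (s : strategy) : profile :=
  fun j => if j == i then s else sg j.

Definition EU (i : 'I_n) (sg : profile) : R :=
  \sum_w P w * (let p := pwin (fun j => sg j (obs j w)) in
                Vstar i w * p + Vlow i w * (1 - p)).

Definition BNE (sg : profile) :=
  valid_profile sg /\
  forall i (s : strategy), valid s -> EU i (upd sg i s) <= EU i sg.

Definition weakly_dominated (i : 'I_n) (s : strategy) :=
  exists s' : strategy, valid s' /\
    (forall sg, valid_profile sg -> EU i (upd sg i s) <= EU i (upd sg i s')) /\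
    (exists sg, valid_profile sg /\ EU i (upd sg i s) < EU i (upd sg i s')).

Definition equilibrium (sg : profile) :=
  BNE sg /\ forall i, ~ weakly_dominated i (sg i).
End Game.

Definition obs_private (j : 'I_n) (w : Omega) : signal := w.2 j.
Definition obs_public (j : 'I_n) (w : Omega) : {ffun 'I_n -> signal} := w.2.

End Model.

(* Main.v *)
Set Warnings "-notation-overridden -ambiguous-paths -notation-incompatible-prefix".
Require Import Defs.
From HB Require Import structures.
From mathcomp Require Import all_boot all_order all_algebra all_fingroup.
From mathcomp Require Import reals.
From mathcomp Require Import ring lra zify.
Set Implicit Arguments. Unset Strict Implicit. Unset Printing Implicit Defensive.
Import Order.TTheory GRing.Theory Num.Theory.
Local Open Scope ring_scope.
Section PwinLemmas.
Variables (R : realType) (n : nat).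

Definition setq (q : 'I_n -> R) (i : 'I_n) (r : R) : 'I_n -> R :=
  fun j => if j == i then r else q j.
Definition piv (q : 'I_n -> R) (i : 'I_n) : R :=
  pwin (setq q i 1) - pwin (setq q i 0).
Definition gw (b : bool) (x : R) : R := if b then x else 1 - x.

Lemma eq_pwin (q q' : 'I_n -> R) : q =1 q' -> pwin q = pwin q'.
Proof.
move=> e; rewrite /pwin; apply: eq_bigr => b _; apply: eq_bigr => j _.
by rewrite e.
Qed.

Lemma prod_split (q : 'I_n -> R) (b : {ffun 'I_n -> bool}) i :
  \prod_(j < n) (if b j then q j else 1 - q j) =
  gw (b i) (q i) * \prod_(j < n | j != i) gw (b j) (q j).
Proof. by rewrite (bigD1 i) //. Qed.

Lemma pwin_setq q i r :
  pwin (setq q i r) = \sum_(b : {ffun 'I_n -> bool} | (tau n < #|[set j | b j]|)%N)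
     gw (b i) r * \prod_(j < n | j != i) gw (b j) (q j).
Proof.
rewrite /pwin; apply: eq_bigr => b _; rewrite (prod_split _ _ i).
rewrite /setq eqxx; congr (_ * _); apply: eq_bigr => j /negbTE ->; done.
Qed.

Lemma pwin_affine q i : pwin q = pwin (setq q i 0) + q i * piv q i.
Proof.
rewrite /piv !pwin_setq mulrBr !mulr_sumr -sumrB -big_split /=.
rewrite /pwin; apply: eq_bigr => b _; rewrite (prod_split _ _ i) /gw.
by case: (b i); ring.
Qed.

Definition flipb (i : 'I_n) (b : {ffun 'I_n -> bool}) : {ffun 'I_n -> bool} :=
  [ffun j => if j == i then ~~ b j else b j].

Lemma flipbK i : involutive (flipb i).
Proof.
move=> b; apply/ffunP => j; rewrite /flipb !ffunE.
by case: (j == i) => //; rewrite negbK.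
Qed.

Lemma piv_ge0 q i : (forall j, 0 <= q j <= 1) -> 0 <= piv q i.
Proof.
move=> hq.
have gw0 : forall b x, 0 <= x <= 1 -> 0 <= gw b x.
  by move=> b x /andP[h0 h1]; case: b => //=; rewrite subr_ge0.
set M := fun b : {ffun 'I_n -> bool} => \prod_(j < n | j != i) gw (b j) (q j).
have M0 : forall b, 0 <= M b by move=> b; apply: prodr_ge0 => j _; apply: gw0.
have MF : forall b, M (flipb i b) = M b.
  move=> b; apply: eq_bigr => j /negbTE hj; by rewrite /flipb ffunE hj.
rewrite /piv !pwin_setq -sumrB.
rewrite (bigID (fun b : {ffun 'I_n -> bool} => b i)) /=.
idtac.
have -> : \sum_(b : {ffun 'I_n -> bool} | (tau n < #|[set j | b j]|)%N && ~~ b i)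
    (gw (b i) 1 * M b - gw (b i) 0 * M b) =
    - \sum_(b : {ffun 'I_n -> bool} | (tau n < #|[set j | flipb i b j]|)%N && b i) M b.
  rewrite (reindex_inj (inv_inj (flipbK i))) /= -sumrN.
  apply: eq_big => b; have fi : flipb i b i = ~~ b i by rewrite /flipb ffunE eqxx.
    by rewrite fi negbK.
  rewrite fi negbK => /andP[_ hb]; rewrite MF hb /gw /=; ring.
have -> : \sum_(b : {ffun 'I_n -> bool} | (tau n < #|[set j | b j]|)%N && b i)
    (gw (b i) 1 * M b - gw (b i) 0 * M b) =
    \sum_(b : {ffun 'I_n -> bool} | (tau n < #|[set j | b j]|)%N && b i) M b.
  by apply: eq_bigr => b /andP[_ ->]; rewrite /gw; ring.
rewrite subr_ge0 (big_mkcond (fun b => _ && _)) [X in _ <= X]big_mkcond /=.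
apply: ler_sum => b _.
case hb: (b i); rewrite ?andbF ?andbT; last by rewrite lexx.
case h: (tau n < #|[set j | flipb i b j]|)%N; last by case: ifP.
have -> : (tau n < #|[set j | b j]|)%N.
  apply: leq_trans h _; apply: subset_leq_card; apply/subsetP => j.
  by rewrite !inE /flipb ffunE; case: eqP => // ->; rewrite hb.
by rewrite lexx.
Qed.

Lemma pwin01 (c : 'I_n -> bool) :
  pwin (fun j => (c j)%:R : R) = ((tau n < #|[set j | c j]|)%N%:R : R).
Proof.
rewrite /pwin.
have e : forall b : {ffun 'I_n -> bool},
    \prod_(j < n) (if b j then ((c j)%:R : R) else 1 - (c j)%:R) =
    (b == finfun c)%:R.
  move=> b; case: eqP => [->|].
    by apply: big1 => j _; rewrite ffunE; case: (c j) => //=; rewrite subr0.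
  move=> ne; have [j hj] : exists j, b j != c j.
    case: (pickP (fun j => b j != c j)) => [j hj|h]; first by exists j.
    exfalso; apply: ne; apply/ffunP => j; rewrite ffunE.
    by move: (h j) => /= /negbFE/eqP.
  rewrite (bigD1 j) //=; move: hj; case: (b j); case: (c j) => //= _;
    by rewrite ?subrr mul0r.
under eq_bigr do rewrite e.
rewrite big_mkcond /= (bigD1 (finfun c)) //= big1 ?addr0.
  have -> : [set j | finfun c j] = [set j | c j] by apply/setP => j; rewrite !inE ffunE.
  by rewrite eqxx; case: (_ < _)%N.
by move=> b /negbTE ->; case: (_ < _)%N.
Qed.

Lemma exists_split (i : 'I_n) : (tau n <= n.-1)%N ->
  exists S : {set 'I_n}, i \notin S /\ #|S| = tau n.
Proof.
move=> ht; exists [set x in take (tau n) (enum [set~ i])]; split.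
  rewrite inE; apply/negP => /mem_take; rewrite mem_enum !inE eqxx //.
rewrite cardsE; have /card_uniqP -> : uniq (take (tau n) (enum [set~ i])).
  by apply: take_uniq; apply: enum_uniq.
rewrite size_take -cardE cardsC1 card_ord.
case: ltnP => // h; apply/eqP; rewrite eqn_leq h /=.
by rewrite -subn1 in ht *; move: ht; case: n {i} => //.
Qed.

Lemma piv_split (i : 'I_n) (S : {set 'I_n}) : i \notin S -> #|S| = tau n ->
  piv (fun j => (j \in S)%:R : R) i = 1.
Proof.
move=> hi hS; rewrite /piv.
rewrite (@eq_pwin _ (fun j => (j \in i |: S)%:R)); last first.
  by move=> j; rewrite /setq !inE; case: eqP.
rewrite (@eq_pwin (setq _ i 0) (fun j => (j \in S)%:R)); last first.
  by move=> j; rewrite /setq; case: eqP => // ->; rewrite (negbTE hi).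
rewrite !pwin01.
have -> : [set j | j \in i |: S] = i |: S by apply/setP => j; rewrite inE.
have -> : [set j | j \in S] = S by apply/setP => j; rewrite inE.
by rewrite cardsU1 hi hS ltnSn ltnn subr0.
Qed.

End PwinLemmas.
Section PermLemmas.
Variables (R : realType) (n : nat).

Lemma pwin_perm (pi : {perm 'I_n}) (q : 'I_n -> R) :
  pwin (fun j => q (pi j)) = pwin q.
Proof.
rewrite /pwin.
have hinj : injective (fun b : {ffun 'I_n -> bool} => [ffun j => b ((pi^-1)%g j)]).
  move=> b1 b2 /ffunP e; apply/ffunP => j; have := e (pi j).
  by rewrite !ffunE permK.
rewrite [RHS](reindex_inj hinj) /=; apply: eq_big => b.
  have -> : [set j | [ffun j => b ((pi^-1)%g j)] j] = (pi^-1)%g @^-1: [set j | b j].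
    by apply/setP => j; rewrite !inE ffunE.
  by rewrite card_preimset //; apply: perm_inj.
move=> _; rewrite [RHS](reindex_inj (@perm_inj _ pi)); apply: eq_bigr => j _.
by rewrite ffunE permK.
Qed.

Lemma piv_perm (pi : {perm 'I_n}) (q : 'I_n -> R) i :
  piv (fun j => q (pi j)) i = piv q (pi i).
Proof.
rewrite /piv; congr (_ - _).
  rewrite -(pwin_perm pi (setq q (pi i) 1)); apply: eq_pwin => j.
  by rewrite /setq (inj_eq (@perm_inj _ pi)).
rewrite -(pwin_perm pi (setq q (pi i) 0)); apply: eq_pwin => j.
by rewrite /setq (inj_eq (@perm_inj _ pi)).
Qed.

End PermLemmas.

Section PolyLemmas.
Variables (R : realType) (n : nat).

Definition pwinP (q : 'I_n -> {poly R}) : {poly R} :=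
  \sum_(b : {ffun 'I_n -> bool} | (tau n < #|[set j | b j]|)%N)
     \prod_(j < n) (if b j then q j else 1 - q j).

Lemma horner_pwinP q x : (pwinP q).[x] = pwin (fun j => (q j).[x]).
Proof.
rewrite /pwinP /pwin horner_sum; apply: eq_bigr => b _.
rewrite horner_prod; apply: eq_bigr => j _.
by case: (b j); rewrite ?hornerE.
Qed.

End PolyLemmas.
Section Model.
Variables (R : realType) (n K : nat) (A1 A2 : finType).
Variables (v1 : A1 -> R) (v2 : A2 -> R) (P : {ffun Omega n K A1 A2 -> R}).
Hypothesis hP0 : forall w, 0 <= P w.

Local Notation O := (Omega n K A1 A2).
Local Notation SP := {ffun 'I_n -> 'I_K.+1}.
Local Notation Vdi := (Vd v1 v2).

Definition qv T (obs : 'I_n -> O -> T) (sg : profile R n T) (w : O) : 'I_n -> R :=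
  fun j => sg j (obs j w).

Definition Base T (obs : 'I_n -> O -> T) i (sg : profile R n T) : R :=
  \sum_w P w * (Vlow v2 i w + Vdi i w * pwin (setq (qv obs sg w) i 0)).

Lemma EU_upd T (obs : 'I_n -> O -> T) i sg s :
  EU v1 v2 P obs i (upd sg i s) =
  Base obs i sg + \sum_w P w * Vdi i w * piv (qv obs sg w) i * s (obs i w).
Proof.
rewrite /EU /Base -big_split; apply: eq_bigr => w _ /=.
rewrite (pwin_affine _ i).
have e : forall r, setq (qv obs (upd sg i s) w) i r =1 setq (qv obs sg w) i r.
  by move=> r j; rewrite /setq /qv /upd; case: eqP.
rewrite /piv !(eq_pwin (e _)).
have -> : upd sg i s i = s by rewrite /upd eqxx.
rewrite /Vd; ring.
Qed.

Lemma EU_self T (obs : 'I_n -> O -> T) i sg :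
  EU v1 v2 P obs i sg = EU v1 v2 P obs i (upd sg i (sg i)).
Proof.
rewrite /EU; apply: eq_bigr => w _.
by rewrite (@eq_pwin _ _ _ (fun j => upd sg i (sg i) j (obs j w))) //= => j;
  rewrite /upd; case: eqP => // ->.
Qed.

Lemma EU_diff T (obs : 'I_n -> O -> T) i sg s1 s2 :
  EU v1 v2 P obs i (upd sg i s1) - EU v1 v2 P obs i (upd sg i s2) =
  \sum_w P w * Vdi i w * piv (qv obs sg w) i * (s1 (obs i w) - s2 (obs i w)).
Proof.
rewrite !EU_upd.
have -> : forall a b c : R, (a + b) - (a + c) = b - c by move=> *; ring.
rewrite -sumrB; apply: eq_bigr => w _; ring.
Qed.

Definition aa i (s : SP) : R := \sum_(w | ev_S s w) P w * Vdi i w.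

Lemma group_by_sig i (f : SP -> R) (Q : pred SP) :
  \sum_(w | Q w.2) P w * Vdi i w * f w.2 = \sum_(s | Q s) f s * aa i s.
Proof.
rewrite (partition_big (fun w : O => w.2) Q) //=; apply: eq_bigr => s Qs.
rewrite /aa mulr_sumr; apply: eq_big => w.
  by rewrite /ev_S; case: (w.2 =P s) => [->|_]; rewrite ?Qs ?andbF.
by move=> /andP[_ /eqP ->]; ring.
Qed.

Lemma Pr_ge0 E : 0 <= Pr P E.
Proof. by apply: sumr_ge0 => w _. Qed.

Lemma sum_zero (E : pred O) (f : O -> R) : Pr P E <= 0 ->
  \sum_(w | E w) P w * f w = 0.
Proof.
move=> h; have h0 : Pr P E = 0 by apply/eqP; rewrite eq_le h Pr_ge0.
have := psumr_eq0P (fun w _ => hP0 w) h0 => hw.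
by apply: big1 => w Ew; rewrite hw // mul0r.
Qed.

Lemma VdE_pos i E : 0 < VdE v1 v2 P i E ->
  0 < Pr P E /\ 0 < \sum_(w | E w) P w * Vdi i w.
Proof.
rewrite /VdE /Econd; case: ifP => hp; last by rewrite ltxx.
by rewrite pmulr_lgt0 ?invr_gt0.
Qed.

Lemma VdE_neg i E : VdE v1 v2 P i E < 0 ->
  0 < Pr P E /\ \sum_(w | E w) P w * Vdi i w < 0.
Proof.
rewrite /VdE /Econd; case: ifP => hp; last by rewrite ltxx.
by rewrite pmulr_llt0 ?invr_gt0.
Qed.

Lemma VdE_nonpos i E : ~ (0 < VdE v1 v2 P i E) ->
  \sum_(w | E w) P w * Vdi i w <= 0.
Proof.
rewrite /VdE /Econd; case: ifP => hp.
  by rewrite pmulr_lgt0 ?invr_gt0 // => h; rewrite leNgt; apply/negP.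
by move=> _; rewrite sum_zero // leNgt hp.
Qed.


Lemma tau_le : (tau n <= n.-1)%N.
Proof. by rewrite /tau leq_half_double -addnn; lia. Qed.

Lemma eq_piv (q q' : 'I_n -> R) i : q =1 q' -> piv q i = piv q' i.
Proof.
move=> e; rewrite /piv; congr (_ - _); apply: eq_pwin => j; by rewrite /setq e.
Qed.

Definition piS (sg : profile R n (signal K)) i (s : SP) : R :=
  piv (fun j => sg j (s j)) i.

Definition Ck (sg : profile R n (signal K)) i (k : signal K) : R :=
  \sum_(w : O | w.2 i == k) P w * Vdi i w * piS sg i w.2.

Lemma EU_diff_priv i sg s1 s2 :
  EU v1 v2 P (@obs_private n K A1 A2) i (upd sg i s1) -
  EU v1 v2 P (@obs_private n K A1 A2) i (upd sg i s2) =
  \sum_k (s1 k - s2 k) * Ck sg i k.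
Proof.
rewrite EU_diff (partition_big (fun w : O => w.2 i) predT) //=.
apply: eq_bigr => k _; rewrite /Ck mulr_sumr; apply: eq_bigr => w /eqP hk.
rewrite /qv /obs_private hk /piS; ring.
Qed.

Lemma piS_ge0 sg i s : valid_profile sg -> 0 <= piS sg i s.
Proof. by move=> hv; apply: piv_ge0 => j; apply: hv. Qed.

Hypothesis Aown : A_own_signal_decisive v1 v2 P.
Hypothesis Anz : A_nonzero v1 v2 P.

Lemma aa_good i (s : SP) : good_news v1 v2 P i (s i) -> 0 <= aa i s.
Proof.
move=> /andP[hne hg]; have := (Aown hne).2 hg => /VdE_pos[_ h].
exact: ltW.
Qed.

Lemma aa_bad i (s : SP) : bad_news v1 v2 P i (s i) -> aa i s <= 0.
Proof.
move=> /andP[hne hb]; apply: VdE_nonpos => /(Aown hne).1 h.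
by move: (lt_trans hb h); rewrite ltxx.
Qed.

Lemma Ck_good sg i k : valid_profile sg -> good_news v1 v2 P i k -> 0 <= Ck sg i k.
Proof.
move=> hv hg; rewrite /Ck (group_by_sig i (piS sg i) (fun s : SP => s i == k)).
apply: sumr_ge0 => s /eqP hs; apply: mulr_ge0; first exact: piS_ge0.
by apply: aa_good; rewrite hs.
Qed.

Lemma Ck_bad sg i k : valid_profile sg -> bad_news v1 v2 P i k -> Ck sg i k <= 0.
Proof.
move=> hv hg; rewrite /Ck (group_by_sig i (piS sg i) (fun s : SP => s i == k)).
apply: sumr_le0 => s /eqP hs; apply: mulr_ge0_le0; first exact: piS_ge0.
by apply: aa_bad; rewrite hs.
Qed.

Lemma Ck_alt sg i k :
  Ck sg i k = \sum_(w | ev_Si i k w) P w * (Vdi i w * piS sg i w.2).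
Proof. by apply: eq_bigr => w _; rewrite mulrA. Qed.

Lemma Ck_neither sg i k : k != ord0 -> ~~ good_news v1 v2 P i k ->
  ~~ bad_news v1 v2 P i k -> Ck sg i k = 0.
Proof.
move=> hk; rewrite /good_news /bad_news hk /= -!leNgt => h1 h2.
have h0 : VdE v1 v2 P i (ev_Si i k) = 0 by apply/eqP; rewrite eq_le h1 h2.
rewrite Ck_alt; apply: sum_zero; rewrite leNgt; apply/negP => hp.
by have := Anz i hp; rewrite h0 eqxx.
Qed.

Hypothesis Asym : A_symmetric P.

Definition pw (pi : {perm 'I_n}) (w : O) : O :=
  ([ffun j => w.1 (pi j)], [ffun j => w.2 (pi j)]).

Lemma pw_inj pi : injective (pw pi).
Proof.
move=> [v s] [v' s'] [/ffunP e1 /ffunP e2]; congr pair; apply/ffunP => j.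
  by have := e1 ((pi^-1)%g j); rewrite !ffunE permKV.
by have := e2 ((pi^-1)%g j); rewrite !ffunE permKV.
Qed.

Lemma sym_gen pi (E E' : pred O) (F F' : O -> R) :
  (forall w, E (pw pi w) = E' w) -> (forall w, F (pw pi w) = F' w) ->
  \sum_(w | E w) P w * F w = \sum_(w | E' w) P w * F' w.
Proof.
move=> hE hF; rewrite (reindex_inj (@pw_inj pi)); apply: eq_big => w.
  by rewrite hE.
by move=> _; rewrite hF /pw Asym.
Qed.

Lemma Pr_mul1 E : Pr P E = \sum_(w | E w) P w * 1.
Proof. by apply: eq_bigr => w _; rewrite mulr1. Qed.

Lemma good_sym l i0 k : good_news v1 v2 P l k = good_news v1 v2 P i0 k.
Proof.
set pi := tperm l i0.
have hE : forall w, ev_Si l k (pw pi w) = ev_Si i0 k w.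
  by move=> w; rewrite /ev_Si /Sig /pw /= ffunE tpermL.
have e1 : Pr P (ev_Si l k) = Pr P (ev_Si i0 k).
  by rewrite !Pr_mul1; apply: (sym_gen hE).
have e2 : \sum_(w | ev_Si l k w) P w * Vdi l w = \sum_(w | ev_Si i0 k w) P w * Vdi i0 w.
  apply: (sym_gen hE) => w; by rewrite /Vd /Vstar /Vlow /pw /= !ffunE tpermL.
by rewrite /good_news /VdE /Econd e1 e2.
Qed.

Lemma Ck_sym (g : signal K -> R) l i0 k :
  Ck (fun _ => g) l k = Ck (fun _ => g) i0 k.
Proof.
rewrite !Ck_alt; set pi := tperm l i0.
apply: (sym_gen (pi := pi)) => w.
  by rewrite /ev_Si /Sig /pw /= ffunE tpermL.
congr (_ * _); first by rewrite /Vd /Vstar /Vlow /pw /= !ffunE tpermL.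
rewrite /piS /pw /=.
rewrite (@eq_piv _ (fun j => (fun j => g (w.2 j)) (pi j))); last first.
  by move=> j; rewrite ffunE.
by rewrite (piv_perm pi (fun j => g (w.2 j))) tpermL.
Qed.

Hypothesis Aun : A_uninformed P.

Lemma U_lemma i :
  \sum_(w : O | w.2 i == ord0) P w * Vdi i w =
  Pr P (ev_Si i ord0) * \sum_w P w * Vdi i w.
Proof.
set q0 := Pr P (ev_Si i ord0).
set B := fun (w w' : O) => (w'.1 == w.1) && [forall j, (j != i) ==> (w'.2 j == w.2 j)].
have hP : forall w : O, w.2 i == ord0 -> P w = Pr P (B w) * q0.
  by move=> [v s] /= /eqP h; rewrite (@Aun i v s h).
have hV : forall w w' : O, B w w' -> Vdi i w = Vdi i w'.
  by move=> w w' /andP[/eqP e _]; rewrite /Vd /Vstar /Vlow e.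
have -> : \sum_(w : O | w.2 i == ord0) P w * Vdi i w =
   q0 * \sum_(w : O) \sum_(w' : O) (if (w.2 i == ord0) && B w w' then P w' * Vdi i w' else 0).
  rewrite mulr_sumr [RHS](bigID (fun w : O => w.2 i == ord0)) /=.
  rewrite [X in _ = _ + X]big1 ?addr0; last first.
    by move=> w /negbTE h0; rewrite big1 ?mulr0 // => w' _; rewrite h0.
  apply: eq_big => // w h0.
  rewrite (hP _ h0) /Pr mulr_suml mulr_suml mulr_sumr [LHS]big_mkcond /=.
  apply: eq_bigr => w' _; rewrite h0 /=; case: ifP => hb; last by rewrite ?mul0r ?mulr0.
  by rewrite (hV _ _ hb); ring.
congr (_ * _); rewrite exchange_big; apply: eq_bigr => w' _.
set ws : O := (w'.1, [ffun j => if j == i then ord0 else w'.2 j]).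
rewrite (bigD1 ws) //= big1 ?addr0.
  rewrite ffunE eqxx /= /B /= eqxx /=.
  have -> : [forall j, (j != i) ==> (w'.2 j == [ffun j => if j == i then ord0 else w'.2 j] j)].
    by apply/forallP => j; rewrite ffunE; case: (j =P i) => //= _; rewrite eqxx.
  by [].
move=> w hw; case: ifP => // /andP[h0 /andP[/eqP e1 /forallP e2]].
exfalso; move/eqP: hw; apply; rewrite /ws; case: w h0 e1 e2 => v s /= h0 e1 e2.
congr pair => //; apply/ffunP => j; rewrite ffunE; case: eqP => [->|/eqP hj].
  exact/eqP.
by have := e2 j; rewrite hj /= => /eqP.
Qed.

Hypothesis Aprior : A_prior_favors v1 v2 P.

Lemma EVd_pos i : 0 < \sum_w P w * Vdi i w.
Proof. by have [_ h] := VdE_pos (Aprior i). Qed.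

Definition sgc (T : Type) (S : {set 'I_n}) : profile R n T :=
  fun j _ => (j \in S)%:R.

Lemma sgc_valid T S : valid_profile (@sgc T S).
Proof. by move=> j t; rewrite /sgc; case: (j \in S); rewrite /= ?ler01 ?lexx. Qed.

Lemma C0_pos i sg : Ck sg i ord0 != 0 ->
  exists sg', valid_profile sg' /\ 0 < Ck sg' i ord0.
Proof.
move=> hne.
have hq : 0 < Pr P (ev_Si i ord0).
  rewrite ltNge; apply/negP => h; move: hne; rewrite Ck_alt sum_zero ?eqxx //.
have [S [hi hS]] := exists_split i tau_le.
exists (@sgc (signal K) S); split; first exact: sgc_valid.
have -> : Ck (@sgc (signal K) S) i ord0 = \sum_(w : O | w.2 i == ord0) P w * Vdi i w.
  apply: eq_bigr => w _; rewrite /piS /sgc.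
  by rewrite (@piv_split R n i S hi hS) mulr1.
by rewrite U_lemma mulr_gt0 // EVd_pos.
Qed.

Definition gx (i0 : 'I_n) (x : R) : signal K -> R :=
  fun k => if good_news v1 v2 P i0 k then 1 else if k == ord0 then x else 0.

Definition gP (i0 : 'I_n) (k : signal K) : {poly R} :=
  if good_news v1 v2 P i0 k then 1 else if k == ord0 then 'X else 0.

Definition setqP (q : 'I_n -> {poly R}) i (r : R) : 'I_n -> {poly R} :=
  fun j => if j == i then r%:P else q j.

Definition DP (i0 : 'I_n) : {poly R} :=
  \sum_(w : O | w.2 i0 == ord0) (P w * Vdi i0 w)%:P *
     (pwinP (setqP (fun j => gP i0 (w.2 j)) i0 1) -
      pwinP (setqP (fun j => gP i0 (w.2 j)) i0 0)).

Lemma DP_eval i0 x : (DP i0).[x] = Ck (fun _ => gx i0 x) i0 ord0.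
Proof.
rewrite /DP horner_sum; apply: eq_bigr => w _.
rewrite hornerM hornerC hornerD hornerN !horner_pwinP /piS /piv -mulrA.
have e : forall r, (fun j => (setqP (fun j => gP i0 (w.2 j)) i0 r j).[x]) =1
                   setq (fun j => gx i0 x (w.2 j)) i0 r.
  move=> r j; rewrite /setqP /setq; case: (j == i0); rewrite ?hornerC //.
  rewrite /gP /gx; case: good_news; rewrite ?hornerC //.
  by case: (_ == _); rewrite ?hornerX ?hornerC.
by rewrite !(eq_pwin (e _)) mulrA.
Qed.

Definition piP (sg : profile R n SP) i (s : SP) : R := piv (fun j => sg j s) i.

Lemma EU_diff_pub i sg s1 s2 :
  EU v1 v2 P (@obs_public n K A1 A2) i (upd sg i s1) -
  EU v1 v2 P (@obs_public n K A1 A2) i (upd sg i s2) =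
  \sum_s (piP sg i s * (s1 s - s2 s)) * aa i s.
Proof.
rewrite EU_diff.
have := group_by_sig i (fun s => piP sg i s * (s1 s - s2 s)) predT => /= <-.
by apply: eq_bigr => w _; rewrite /qv /obs_public /piP; ring.
Qed.

End Model.

Theorem proposition1 (R : realType) (n K : nat) (A1 A2 : finType)
    (v1 : A1 -> R) (v2 : A2 -> R) (P : {ffun Omega n K A1 A2 -> R}) :
  odd n -> (3 <= n)%N ->
  injective v1 -> injective v2 ->
  is_prob P ->
  A_prior_favors v1 v2 P ->
  A_symmetric P ->
  A_uninformed P ->
  A_own_signal_decisive v1 v2 P ->
  A_nonzero v1 v2 P ->
  A_news v1 v2 P ->
  (exists sg, equilibrium v1 v2 P (@obs_private n K A1 A2) sg) /\
  (exists phi, equilibrium v1 v2 P (@obs_public n K A1 A2) phi /\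
     forall phi', equilibrium v1 v2 P (@obs_public n K A1 A2) phi' ->
       forall (i : 'I_n) (s : {ffun 'I_n -> 'I_K.+1}),
         0 < Pr P (ev_S s) -> phi' i s = phi i s).
Proof.
move=> _ hn3 _ _ [hP0 _] Aprior Asym Aun Aown Anz _.
have hn0 : (0 < n)%N by apply: leq_trans hn3.
split.
-
  pose i0 : 'I_n := Ordinal hn0.
  pose D := fun x => Ck v1 v2 P (fun _ => gx v1 v2 P i0 x) i0 ord0.
  have Dsym : forall i x, Ck v1 v2 P (fun _ => gx v1 v2 P i0 x) i ord0 = D x.
    by move=> i x; rewrite /D (Ck_sym v1 v2 Asym _ i i0).
  have [x /andP[hx0 hx1] [Hp Hn Hl]] : exists2 x, 0 <= x <= 1 &
      [/\ 0 < D x -> x = 1, D x < 0 -> x = 0 & x < 1 -> D 1 < 0].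
    case: (lerP 0 (D 1)) => h1.
      exists 1; first by rewrite ler01 lexx.
      split => // h; [by move: (lt_le_trans h h1); rewrite ltxx | by move: h; rewrite ltxx].
    case: (lerP (D 0) 0) => h0.
      exists 0; first by rewrite lexx ler01.
      by split => // h; move: (lt_le_trans h h0); rewrite ltxx.
    have [x /andP[hx0 hx1] hr] : exists2 x, 0 <= x <= 1 & root (- DP v1 v2 P i0) x.
      apply: poly_ivt; first exact: ler01.
      by rewrite !hornerN !DP_eval -/(D 0) -/(D 1) oppr_le0 oppr_ge0 !ltW.
    exists x; first by rewrite hx0 hx1.
    move: hr; rewrite /root hornerN DP_eval -/(D x) oppr_eq0 => /eqP ->.
    by split => //; rewrite ltxx.
  set g := gx v1 v2 P i0 x.
  have gval : valid g.
    move=> k; rewrite /g /gx; case: good_news; first by rewrite ler01 lexx.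
    by case: (_ == _); rewrite ?hx0 ?hx1 ?lexx ?ler01.
  have g0 : g ord0 = x by rewrite /g /gx /good_news eqxx.
  have gk : forall i k, k != ord0 -> g k = if good_news v1 v2 P i k then 1 else 0.
    by move=> i k hk; rewrite /g /gx (good_sym v1 v2 Asym i i0) (negbTE hk).
  have term : forall i sg s, valid_profile sg -> valid s -> forall k, k != ord0 ->
      (s k - g k) * Ck v1 v2 P sg i k <= 0.
    move=> i sg s hv hs k hk; rewrite (gk i k hk).
    case hg: (good_news v1 v2 P i k).
      have := hs k => /andP[_ h1].
      by apply: mulr_le0_ge0; [rewrite subr_le0 | exact: Ck_good].
    case hb: (bad_news v1 v2 P i k).
      have := hs k => /andP[h0 _].
      by apply: mulr_ge0_le0; [rewrite subr0 | exact: (Ck_bad hP0)].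
    by rewrite (Ck_neither hP0 Anz sg hk) ?hg ?hb // mulr0.
  have bound : forall i sg s, valid_profile sg -> valid s ->
      EU v1 v2 P (@obs_private n K A1 A2) i (upd sg i s) -
      EU v1 v2 P (@obs_private n K A1 A2) i (upd sg i g) <=
      (s ord0 - x) * Ck v1 v2 P sg i ord0.
    move=> i sg s hv hs; rewrite EU_diff_priv (bigD1 ord0) //= g0.
    have : \sum_(k | k != ord0) (s k - g k) * Ck v1 v2 P sg i k <= 0.
      by apply: sumr_le0 => k hk; apply: term.
    lra.
  exists (fun _ => g); split; first split.
  + by move=> j.
  + move=> i s hs; rewrite [X in _ <= X](EU_self v1 v2 P) -subr_ge0 -opprB oppr_ge0.
    apply: le_trans (bound i _ s (fun=> gval) hs) _; rewrite Dsym.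
    have := hs ord0 => /andP[h0 h1].
    case: (ltgtP (D x) 0) => hD.
    * by rewrite {1}(Hn hD); nra.
    * by rewrite {1}(Hp hD); nra.
    * by rewrite hD mulr0.
  + move=> i [s' [hs' [hall [sg1 [hv1 hlt]]]]].
    have key : forall sg, valid_profile sg -> 0 <= (s' ord0 - x) * Ck v1 v2 P sg i ord0.
      move=> sg hv; apply: le_trans (bound i sg s' hv hs'); rewrite subr_ge0.
      exact: hall.
    have strict : 0 < (s' ord0 - x) * Ck v1 v2 P sg1 i ord0.
      by apply: lt_le_trans (bound i sg1 s' hv1 hs'); rewrite subr_gt0.
    case: (ltgtP (s' ord0) x) => hsx.
    * have hC : Ck v1 v2 P sg1 i ord0 != 0.
        by apply/eqP => h; move: strict; rewrite h mulr0 ltxx.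
      have [sg2 [hv2 hpos]] := C0_pos hP0 Aun Aprior hC.
      have := key sg2 hv2; rewrite leNgt => /negP; apply.
      by rewrite pmulr_llt0 // subr_lt0.
    * have hx1' : x < 1 by apply: lt_le_trans hsx _; have := hs' ord0 => /andP[].
      have hv1' : valid_profile (fun _ : 'I_n => gx v1 v2 P i0 1).
        move=> _ k; rewrite /gx; case: good_news; first by rewrite ler01 lexx.
        by case: (_ == _); rewrite lexx ler01.
      have := key _ hv1'; rewrite Dsym => hk.
      have : (s' ord0 - x) * D 1 < 0 by rewrite pmulr_rlt0 ?subr_gt0 // Hl.
      by rewrite ltNge hk.
    * by move: strict; rewrite hsx subrr mul0r ltxx.
-
  pose phi : profile R n {ffun 'I_n -> signal K} :=
    fun i s => if 0 < aa v1 v2 P i s then 1 else 0.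
  have phival : valid_profile phi.
    by move=> i s; rewrite /phi; case: ifP; rewrite ?lexx ?ler01.
  have sinc : forall i (s : strategy R {ffun 'I_n -> signal K}) t, valid s ->
      (s t - phi i t) * aa v1 v2 P i t <= 0.
    move=> i s t hs; have := hs t => /andP[h0 h1]; rewrite /phi.
    case: ifP => ha; first by apply: mulr_le0_ge0; [rewrite subr_le0 | exact: ltW].
    by apply: mulr_ge0_le0; [rewrite subr0 | rewrite leNgt ha].
  have piP0 : forall (sg : profile R n {ffun 'I_n -> signal K}) (i : 'I_n) t, valid_profile sg -> 0 <= piP sg i t.
    by move=> sg i t hv; rewrite /piP; apply: piv_ge0 => j; apply: hv.
  have dpub : forall i sg s, valid_profile sg -> valid s ->
      EU v1 v2 P (@obs_public n K A1 A2) i (upd sg i s) -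
      EU v1 v2 P (@obs_public n K A1 A2) i (upd sg i (phi i)) <= 0.
    move=> i sg s hv hs; rewrite EU_diff_pub; apply: sumr_le0 => t _.
    by rewrite -mulrA; apply: mulr_ge0_le0; [apply: piP0 | apply: sinc].
  exists phi; split.
    split; first split => //.
      move=> i s hs; rewrite [X in _ <= X](EU_self v1 v2 P) -subr_le0.
      exact: dpub.
    move=> i [s' [hs' [_ [sg1 [hv1 hlt]]]]].
    have := dpub i sg1 s' hv1 hs'; rewrite leNgt subr_gt0.
    by move=> /negP; apply.
  move=> phi' [[hv' hbne] hund] i s0 hp.
  case: (eqVneq (phi' i s0) (phi i s0)) => // hne; exfalso.
  have aa0 : aa v1 v2 P i s0 != 0.
    apply/eqP => h; have := @Anz i (ev_S s0) hp; rewrite /VdE /Econd hp.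
    by rewrite -/(aa v1 v2 P i s0) h mul0r eqxx.
  have dir : 0 < (phi i s0 - phi' i s0) * aa v1 v2 P i s0.
    have := hv' i s0 => /andP[h0 h1]; move: hne; rewrite /phi.
    case: ifP => ha hne.
      apply: mulr_gt0 => //; rewrite subr_gt0 lt_neqAle h1 andbT; exact: hne.
    have han : aa v1 v2 P i s0 < 0 by rewrite lt_neqAle aa0 /= leNgt ha.
    have hpos : 0 < phi' i s0 by rewrite lt_neqAle h0 andbT eq_sym.
    nra.
  pose s'' : strategy R {ffun 'I_n -> signal K} :=
    fun t => if t == s0 then phi i s0 else phi' i t.
  apply: (hund i); exists s''; split.
    by move=> t; rewrite /s''; case: (t == s0); [apply: phival | apply: hv'].
  have red : forall sg, EU v1 v2 P (@obs_public n K A1 A2) i (upd sg i s'') -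
      EU v1 v2 P (@obs_public n K A1 A2) i (upd sg i (phi' i)) =
      piP sg i s0 * ((phi i s0 - phi' i s0) * aa v1 v2 P i s0).
    move=> sg; rewrite EU_diff_pub (bigD1 s0) //= big1 ?addr0.
      by rewrite /s'' eqxx mulrA.
    by move=> t /negbTE ht; rewrite /s'' ht subrr mulr0 mul0r.
  split.
    move=> sg hv; rewrite -subr_ge0 red; apply: mulr_ge0; first exact: piP0.
    exact: ltW.
  have [S [hi hS]] := exists_split i (tau_le n).
  exists (@sgc R n {ffun 'I_n -> signal K} S); split; first exact: sgc_valid.
  rewrite -subr_gt0 red.
  by rewrite /piP /sgc (piv_split R hi hS) mul1r.
Qed.
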